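(* Let $A$ be a real symmetric $n\times n$ matrix with $A\mathbf{1}_n=\rho_A\mathbf{1}_n$ for some $\rho_A>0$, and let $B$ be a real symmetric $m\times m$ matrix with $B\mathbf{1}_m=\rho_B\mathbf{1}_m$ for some $\rho_B>0$. Then (a) $n_-(A\diamond B)=n_-(A)+n_-(B)$, (b) $n_+(A\diamond B)=n_+(A)+n_+(B)-1$, and (c) $n_0(A\diamond B)=nm-n-m+1+n_0(A)+n_0(B)$.
   Context: $\mathbf{1}_k$ is the all-ones column vector of length $k$ and $J_k$ the $k\times k$ all-ones matrix. For an $n\times n$ matrix $A=(a_{ij})$ and an $m\times m$ matrix $B$, $A\diamond B=A\otimes J_m+J_n\otimes B$ is the $nm\times nm$ block matrix whose $(i,j)$ block is $a_{ij}J_m+B$. For a real symmetric matrix $M$, $n_+(M)$, $n_-(M)$, $n_0(M)$ denote the numbers of positive, negative, and zero eigenvalues of $M$, counted with multiplicity. *)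

(* Defs.v *)
From HB Require Import structures.
From mathcomp Require Import all_boot all_order all_algebra.
From mathcomp Require Import polyorder polyrcf mxtens.
From mathcomp Require Import reals.
Set Implicit Arguments. Unset Strict Implicit. Unset Printing Implicit Defensive.
Import Order.TTheory GRing.Theory Num.Theory.
Local Open Scope ring_scope.

Definition Jmx (R : realType) (k : nat) : 'M[R]_k := const_mx 1.
Definition ones (R : realType) (k : nat) : 'cV[R]_k := const_mx 1.

Definition diamond (R : realType) (n m : nat) (A : 'M[R]_n) (B : 'M[R]_m)
  : 'M[R]_(n * m) := A *t Jmx R m + Jmx R n *t B.

Definition n_pos (R : realType) (k : nat) (M : 'M[R]_k) : nat :=
  \sum_(x <- rootsR (char_poly M) | 0 < x) \mu_x (char_poly M).
Definition n_neg (R : realType) (k : nat) (M : 'M[R]_k) : nat :=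
  \sum_(x <- rootsR (char_poly M) | x < 0) \mu_x (char_poly M).
Definition n_zero (R : realType) (k : nat) (M : 'M[R]_k) : nat :=
  \sum_(x <- rootsR (char_poly M) | x == 0) \mu_x (char_poly M).

(* Main.v *)
Require Import Defs.
From HB Require Import structures.
From mathcomp Require Import all_boot all_order all_algebra.
From mathcomp Require Import polyorder polyrcf mxtens.
From mathcomp Require Import reals.
Set Implicit Arguments. Unset Strict Implicit. Unset Printing Implicit Defensive.
Import Order.TTheory GRing.Theory Num.Theory.
Local Open Scope ring_scope.
From mathcomp Require Import zify.

Section Count.
Variable R : realType.
Implicit Types p q : {poly R}.

Definition Nc (P : pred R) p := (\sum_(x <- rootsR p | P x) \mu_x p)%N.

Lemma in_rootsR p x : p != 0 -> (x \in rootsR p) = root p x.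
Proof. by move=> p0; rewrite -(roots_on_rootsR p0 x). Qed.

Lemma NcE (P : pred R) p s : p != 0 -> uniq s -> (forall x, root p x -> x \in s) ->
  (\sum_(x <- s | P x) \mu_x p)%N = Nc P p.
Proof.
move=> p0 us sub; rewrite /Nc (bigID (root p)) /= [X in (_ + X)%N]big1 ?addn0; last first.
  by move=> x /andP[_ /muNroot].
rewrite (eq_bigl (fun x => root p x && P x)); last by move=> x; rewrite andbC.
rewrite -big_filter_cond; apply: perm_big.
apply: uniq_perm; rewrite ?filter_uniq //; first exact: uniq_roots.
by move=> x; rewrite mem_filter in_rootsR //; case: (boolP (root p x)) => // /sub ->.
Qed.

Lemma Nc_mul P p q : p * q != 0 -> Nc P (p * q) = (Nc P p + Nc P q)%N.
Proof.
move=> pq0; have := pq0; rewrite mulf_eq0 negb_or => /andP[p0 q0].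
rewrite {1}/Nc; under eq_bigr => x _ do rewrite mu_mul //.
rewrite big_split /=; congr addn; apply: NcE => //; rewrite ?uniq_roots //.
  by move=> x rx; rewrite in_rootsR // rootM rx.
by move=> x rx; rewrite in_rootsR // rootM rx orbT.
Qed.

Lemma Nc_XsubC P a : Nc P ('X - a%:P) = P a.
Proof.
rewrite -(@NcE P _ [:: a]) ?polyXsubC_eq0 //; last first.
  by move=> x; rewrite root_XsubC => /eqP ->; rewrite inE.
by rewrite big_cons big_nil mu_XsubC; case: (P a).
Qed.

Lemma Nc_Xn P k : Nc P ('X^k) = (P 0%R * k)%N.
Proof.
have X0 : 'X^k != 0 :> {poly R} by rewrite expf_neq0 // polyX_eq0.
rewrite -(@NcE P _ [:: 0]) //; last first.
  by move=> x; rewrite rootE hornerXn expf_eq0 => /andP[_ /eqP ->]; rewrite inE.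
rewrite big_cons big_nil -['X]subr0 -polyC0 mu_exp mu_XsubC mul1n.
by case: (P 0); rewrite ?mul1n ?mul0n ?addn0.
Qed.

Lemma Nc_scale P c p : c != 0 -> Nc P (c *: p) = Nc P p.
Proof.
move=> c0; have [->|p0] := eqVneq p 0; first by rewrite scaler0.
have cp0 : c *: p != 0 by rewrite scaler_eq0 negb_or c0.
rewrite -(@NcE P _ (rootsR p)) ?uniq_roots //; last first.
  by move=> x; rewrite rootZ // in_rootsR.
by apply: eq_bigr => x _; rewrite mu_mulC.
Qed.

Lemma mu_comp c p x : c != 0 -> p != 0 ->
  \mu_x (p \Po (c *: 'X)) = \mu_(c * x) p.
Proof.
move=> c0 p0; have [q rq ->] := mu_spec (c * x) p0.
set k := \mu_(c * x) _.
have e : ('X - (c * x)%:P) \Po (c *: 'X) = c%:P * ('X - x%:P).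
  by rewrite comp_polyB comp_polyX comp_polyC mulrBr mul_polyC polyCM.
rewrite comp_polyM rmorphXn /= e exprMn -rmorphXn /= mulrA.
have q0 : q != 0 by apply: contraNneq rq => ->; rewrite root0.
have q'0 : ~~ root (q \Po (c *: 'X)) x.
  by rewrite root_comp hornerZ hornerX.
have hq0 : (q \Po (c *: 'X)) * (c ^+ k)%:P != 0.
  rewrite mulf_neq0 // ?polyC_eq0 ?expf_neq0 //.
  by apply: contraNneq q'0 => ->; rewrite root0.
rewrite mu_mul; last by rewrite mulf_neq0 // expf_neq0 // polyXsubC_eq0.
rewrite mu_mul; last by rewrite mulf_neq0 // expf_neq0 // polyXsubC_eq0.
by rewrite mu_mul // mu_polyC (muNroot q'0) (muNroot rq) !mu_exp !mu_XsubC.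
Qed.

Lemma Nc_comp P c p : 0 < c -> (forall x, P (c * x) = P x) ->
  Nc P (p \Po (c *: 'X)) = Nc P p.
Proof.
move=> c0 Pc; have c0' : c != 0 by rewrite gt_eqF.
have [->|p0] := eqVneq p 0; first by rewrite comp_poly0.
have sz : (1 < size (c *: 'X : {poly R}))%N by rewrite size_scale // size_polyX.
have pc0 : p \Po (c *: 'X) != 0 by rewrite comp_poly_eq0.
rewrite -(@NcE P _ (map (fun y => y / c) (rootsR p))) //.
- rewrite big_map; apply: eq_big => y.
    by rewrite -Pc mulrC divfK.
  by move=> _; rewrite mu_comp // mulrC divfK.
- rewrite map_inj_uniq ?uniq_roots //.
  by apply: (can_inj (g := fun z => z * c)) => z; rewrite divfK.
- move=> x; rewrite root_comp hornerZ hornerX => rx.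
  apply/mapP; exists (c * x); first by rewrite in_rootsR.
  by rewrite [c * x]mulrC mulfK.
Qed.

End Count.

Section Mx.
Variable R : fieldType.

Lemma char_sim k (M D P : 'M[R]_k) : P \in unitmx -> M *m P = P *m D ->
  char_poly M = char_poly D.
Proof.
move=> uP e.
have e' : char_poly_mx M *m map_mx polyC P = map_mx polyC P *m char_poly_mx D.
  rewrite /char_poly_mx mulmxBl mulmxBr -!map_mxM e.
  by rewrite mul_scalar_mx mul_mx_scalar.
have nz : \det (map_mx polyC P) != 0.
  by rewrite det_map_mx polyC_eq0 -unitfE -unitmxE.
have := congr1 determinant e'; rewrite !det_mulmx [X in _ = X]mulrC.
by move/(mulIf nz).
Qed.

Lemma char_cast k1 k2 (e1 e2 : k1 = k2) (M : 'M[R]_k1) :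
  char_poly (castmx (e1, e2) M) = char_poly M.
Proof. by rewrite (eq_irrelevance e2 e1); case: k2 / e1 {e2}; rewrite castmx_id. Qed.

Lemma char_block k1 k2 (X : 'M[R]_k1) (Y : 'M[R]_k2) :
  char_poly (block_mx X 0 0 Y) = char_poly X * char_poly Y.
Proof. by rewrite /char_poly char_block_diag_mx det_ublock. Qed.

Lemma char_scalar1 (c : R) : char_poly (c%:M : 'M[R]_1) = 'X - c%:P.
Proof. by rewrite /char_poly det_mx11 !mxE /= mulr1n. Qed.

Lemma sylvester N k (U : 'M[R]_(N, k)) (V : 'M[R]_(k, N)) :
  'X^k * char_poly (U *m V) = 'X^N * char_poly (V *m U).
Proof.
rewrite /char_poly /char_poly_mx !map_mxM.
set U' := map_mx polyC U; set V' := map_mx polyC V.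
set T := block_mx ('X%:M : 'M_N) U' V' (1%:M : 'M_k).
have e1 : T = block_mx 1%:M U' 0 1%:M *m block_mx ('X%:M - U' *m V') 0 V' 1%:M.
  by rewrite /T mulmx_block !mul1mx !mulmx0 !mul0mx !mulmx1 !add0r subrK.
have e2 : block_mx 1%:M 0 (- V') ('X%:M : 'M_k) *m T
          = block_mx ('X%:M) U' 0 ('X%:M - V' *m U').
  rewrite /T mulmx_block !mul1mx !mul0mx !addr0 !mulmx1 mul_mx_scalar mul_scalar_mx.
  by rewrite scalerN addNr mulNmx addrC.
have := congr1 determinant e2; rewrite det_mulmx e1 det_mulmx det_ublock det_lblock.
rewrite det_lblock det_ublock !det1 !det_scalar !mul1r mulr1 => ->.
by rewrite mulrC.
Qed.

Lemma char_scale k (c : R) (M : 'M[R]_k) :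
  char_poly (c *: M) \Po (c *: 'X) = c ^+ k *: char_poly M.
Proof.
rewrite /char_poly -det_map_mx.
have -> : map_mx (comp_poly (c *: 'X)) (char_poly_mx (c *: M))
          = c%:P *: char_poly_mx M.
  apply/matrixP => i j; rewrite !mxE comp_polyB comp_polyC; case: (i == j); rewrite ?mulr1n ?mulr0n ?comp_polyX ?comp_poly0 polyCM; rewrite mulrBr -?mul_polyC //. by rewrite mulr0.
by rewrite -mul_scalar_mx det_mulmx det_scalar -rmorphXn mul_polyC.
Qed.

End Mx.

Section Sim.
Variable R : numFieldType.

Lemma zmod_aux (V : zmodType) (x y z : V) : - ((x - y) - (x - z)) = y - z.
Proof. by rewrite opprB opprB addrC addrA subrK. Qed.

Lemma rc_mx k : (const_mx 1 : 'M[R]_(1, k)) *m (const_mx 1 : 'M[R]_(k, 1)) = (k%:R)%:M.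
Proof.
apply/matrixP => i j; rewrite !mxE; under eq_bigr do rewrite !mxE mulr1.
by rewrite sumr_const card_ord [i]ord1 [j]ord1 eqxx mulr1n.
Qed.

Lemma const11 : (const_mx 1 : 'M[R]_1) = 1%:M.
Proof. by apply/matrixP => i j; rewrite !mxE [i]ord1 [j]ord1 eqxx. Qed.

Lemma inv_aux k : (k.+1%:R)^-1 * k%:R + (k.+1%:R)^-1 = 1 :> R.
Proof.
by rewrite -[X in _ + X]mulr1 -mulrDr natr1 mulVf // pnatr_eq0.
Qed.

Lemma simA n' (A : 'M[R]_(n' + 1)) (rho : R) : A^T = A ->
  A *m const_mx 1 = rho *: (const_mx 1 : 'cV_(n' + 1)) ->
  exists P : 'M_(n' + 1), exists A' : 'M_n',
   [/\ P \in unitmx, A *m P = P *m block_mx A' 0 0 rho%:M,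
       P *m col_mx 0 1%:M = const_mx 1
     & (const_mx 1 : 'rV_(n' + 1)) *m P = row_mx 0 ((n' + 1)%:R)%:M].
Proof.
move=> symA eA.
pose c := (const_mx 1 : 'M[R]_(n', 1)); pose r := (const_mx 1 : 'M[R]_(1, n')).
have rc : r *m c = (n'%:R)%:M by exact: rc_mx.
have ones : (const_mx 1 : 'cV[R]_(n' + 1)) = col_mx c 1%:M by rewrite -const11 col_mx_const.
have onesr : (const_mx 1 : 'rV[R]_(n' + 1)) = row_mx r 1%:M by rewrite -const11 row_mx_const.
pose A11 := ulsubmx A; pose a12 := ursubmx A; pose a21 := dlsubmx A; pose a22 := drsubmx A.
have eA0 : A = block_mx A11 a12 a21 a22 by rewrite submxK.
clearbody A11 a12 a21 a22; subst A.
move: symA; rewrite tr_block_mx => /eq_block_mx [s11 s21 s12 s22].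
move: eA; rewrite ones mul_block_col scale_col_mx !mulmx1 => /eq_col_mx [E1 E2].
rewrite scale_scalar_mx mulr1 in E2.
have rA11 : r *m A11 = rho *: r - a21.
  have := congr1 trmx E1; rewrite linearD /= trmx_mul s11 trmx_const s12 linearZ /= trmx_const.
  by move=> <-; rewrite addrK.
have ra12 : r *m a12 = rho%:M - a22.
  have := congr1 trmx E2; rewrite linearD /= trmx_mul s21 trmx_const s22 tr_scalar_mx.
  by move=> <-; rewrite addrK.
exists (block_mx 1%:M c (- r) 1%:M), (A11 - a12 *m r); split.
- pose a := ((n' + 1)%:R : R)^-1.
  suff : block_mx (1%:M - a *: (c *m r)) (- (a *: c)) (a *: r) a%:M
           *m block_mx 1%:M c (- r) 1%:M = 1%:M by case/mulmx1_unit.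
  rewrite mulmx_block (scalar_mx_block n' 1 1) !mulmx1 !mulmxN !mulNmx opprK.
  rewrite -!scalemxAl subrK mul_scalar_mx subrr.
  rewrite mulmxBl mul1mx -scalemxAl -mulmxA rc mul_mx_scalar scalerA.
  rewrite -[c in c - _ - _]scale1r -!scalerBl scale_scalar_mx -raddfD.
  have ha := inv_aux n'; rewrite -addn1 -/a in ha.
  by rewrite ha -addrA -opprD ha subrr scale0r.
- rewrite !mulmx_block !mulmx1 !mul1mx !mulmx0 !addr0 !add0r !mulmxN !mulNmx E1 E2.
  rewrite mul_mx_scalar; congr (block_mx _ _ _ _).
  by rewrite mulmxBr rA11 mulmxA ra12 mulmxBl mul_scalar_mx zmod_aux.
- by rewrite mul_block_col !mulmx0 !mulmx1 !add0r.
- by rewrite onesr mul_row_block !mulmx1 !mul1mx subrr rc natrD raddfD.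
Qed.

Lemma simB m' (B : 'M[R]_(1 + m')) (rho : R) : B^T = B ->
  B *m const_mx 1 = rho *: (const_mx 1 : 'cV_(1 + m')) ->
  exists Q : 'M_(1 + m'), exists B' : 'M_m',
   [/\ Q \in unitmx, B *m Q = Q *m block_mx rho%:M 0 0 B',
       Q *m col_mx 1%:M 0 = const_mx 1
     & (const_mx 1 : 'rV_(1 + m')) *m Q = row_mx ((1 + m')%:R)%:M 0].
Proof.
move=> symB eB.
pose c := (const_mx 1 : 'M[R]_(m', 1)); pose r := (const_mx 1 : 'M[R]_(1, m')).
have rc : r *m c = (m'%:R)%:M by exact: rc_mx.
have ones : (const_mx 1 : 'cV[R]_(1 + m')) = col_mx 1%:M c by rewrite -const11 col_mx_const.
have onesr : (const_mx 1 : 'rV[R]_(1 + m')) = row_mx 1%:M r by rewrite -const11 row_mx_const.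
pose b11 := ulsubmx B; pose b12 := ursubmx B; pose b21 := dlsubmx B; pose B22 := drsubmx B.
have eB0 : B = block_mx b11 b12 b21 B22 by rewrite submxK.
clearbody b11 b12 b21 B22; subst B.
move: symB; rewrite tr_block_mx => /eq_block_mx [s11 s21 s12 s22].
move: eB; rewrite ones mul_block_col scale_col_mx !mulmx1 => /eq_col_mx [E1 E2].
rewrite scale_scalar_mx mulr1 in E1.
have rB22 : r *m B22 = rho *: r - b12.
  have := congr1 trmx E2; rewrite linearD /= trmx_mul s22 trmx_const s21 linearZ /= trmx_const.
  by move=> <-; rewrite [b12 + _]addrC addrK.
have rb21 : r *m b21 = rho%:M - b11.
  have := congr1 trmx E1; rewrite linearD /= trmx_mul s12 trmx_const s11 tr_scalar_mx.
  by move=> <-; rewrite [b11 + _]addrC addrK.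
exists (block_mx 1%:M (- r) c 1%:M), (B22 - b21 *m r); split.
- pose a := ((1 + m')%:R : R)^-1.
  suff : block_mx a%:M (a *: r) (- (a *: c)) (1%:M - a *: (c *m r))
           *m block_mx 1%:M (- r) c 1%:M = 1%:M by case/mulmx1_unit.
  rewrite mulmx_block (scalar_mx_block 1 m' 1) !mulmx1 !mulmxN !mulNmx opprK.
  rewrite -!scalemxAl mul_scalar_mx addNr rc scale_scalar_mx -raddfD.
  rewrite [a *: (c *m r) + _]addrC subrK.
  rewrite mulmxBl mul1mx -scalemxAl -mulmxA rc mul_mx_scalar scalerA addrC.
  rewrite [- (a *: c) + _]addrC -[c in c - _ - _]scale1r -!scalerBl.
  have ha := inv_aux m'; rewrite -add1n -/a in ha.
  by rewrite ha -addrA -opprD ha subrr scale0r.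
- rewrite !mulmx_block !mulmx1 !mul1mx !mulmx0 !addr0 !add0r E1 E2.
  rewrite mul_mx_scalar; congr (block_mx _ _ _ _); last by rewrite mulmxN addrC.
  rewrite mulmxN mulNmx mulmxBr rB22 mulmxA rb21 mulmxBl mul_scalar_mx zmod_aux.
  by rewrite addrC.
- by rewrite mul_block_col !mulmx0 !mulmx1 !addr0.
- by rewrite onesr mul_row_block !mulmx1 !mul1mx addNr rc natrD raddfD.
Qed.

End Sim.
Local Open Scope ring_scope.

Section UV.
Variable R : realType.

Lemma sum_tens n m (F : 'I_(n * m) -> R) :
  \sum_k F k = \sum_(i < n) \sum_(j < m) F (mxtens_index (i, j)).
Proof.
rewrite (reindex (@mxtens_index n m)) /=; last first.
  by exists (@mxtens_unindex n m) => x _; [apply: mxtens_indexK | apply: mxtens_unindexK].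
by rewrite pair_big /=; apply: eq_bigr => -[i j].
Qed.

Lemma sum_deltal k (j : 'I_k) (F : 'I_k -> R) : \sum_b (j == b)%:R * F b = F j.
Proof.
rewrite (bigD1 j) //= eqxx mul1r big1 ?addr0 // => b.
by rewrite eq_sym => /negbTE ->; rewrite mul0r.
Qed.

Lemma sum_deltar k (j : 'I_k) (F : 'I_k -> R) : \sum_b F b * (b == j)%:R = F j.
Proof.
rewrite (bigD1 j) //= eqxx mulr1 big1 ?addr0 // => b /negbTE ->.
by rewrite mulr0.
Qed.

Definition Umx n m (A : 'M[R]_n) (B : 'M[R]_m) : 'M[R]_(n * m, n + m) :=
  row_mx (\matrix_(k, i) A (mxtens_unindex k).1 i)
         (\matrix_(k, j) B (mxtens_unindex k).2 j).
Definition Vmx n m : 'M[R]_(n + m, n * m) :=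
  col_mx (\matrix_(i, k) ((i == (mxtens_unindex k).1)%:R))
         (\matrix_(j, k) ((j == (mxtens_unindex k).2)%:R)).

Lemma UV_diamond n m (A : 'M[R]_n) (B : 'M[R]_m) :
  Umx A B *m Vmx n m = diamond A B.
Proof.
apply/matrixP => k k'; rewrite /Umx /Vmx mul_row_col !mxE.
under eq_bigr do rewrite !mxE.
under [X in _ + X]eq_bigr do rewrite !mxE.
by rewrite sum_deltar sum_deltar mulr1 mul1r.
Qed.

Lemma VU_K n m (A : 'M[R]_n) (B : 'M[R]_m) rhoA rhoB :
  (forall j, \sum_i A i j = rhoA) -> (forall j, \sum_i B i j = rhoB) ->
  Vmx n m *m Umx A B =
  block_mx (m%:R *: A) (const_mx rhoB) (const_mx rhoA) (n%:R *: B).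
Proof.
move=> cA cB; rewrite /Umx /Vmx mul_col_row.
congr block_mx; apply/matrixP => x y; rewrite !mxE sum_tens.
- under eq_bigr do under eq_bigr do rewrite !mxE mxtens_indexK /=.
  under eq_bigr do rewrite -mulr_sumr.
  by rewrite sum_deltal sumr_const card_ord mulr_natl.
- under eq_bigr do under eq_bigr do rewrite !mxE mxtens_indexK /=.
  under eq_bigr do rewrite -mulr_sumr.
  by rewrite sum_deltal cB.
- under eq_bigr do under eq_bigr do rewrite !mxE mxtens_indexK /=.
  under eq_bigr do rewrite sum_deltal.
  by rewrite cA.
- under eq_bigr do under eq_bigr do rewrite !mxE mxtens_indexK /=.
  under eq_bigr do rewrite sum_deltal.
  by rewrite sumr_const card_ord mulr_natl.
Qed.

End UV.

Section Main.
Variable R : realType.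

Lemma const_outer p q (a : R) :
  (const_mx a : 'M[R]_(p, q)) = a *: ((const_mx 1 : 'cV_p) *m (const_mx 1 : 'rV_q)).
Proof.
apply/matrixP => i j; rewrite !mxE big_ord1 !mxE.
by rewrite mulr1 mulr1.
Qed.

Lemma colsum k (A : 'M[R]_k) rho : A^T = A ->
  A *m const_mx 1 = rho *: (const_mx 1 : 'cV_k) -> forall j, \sum_i A i j = rho.
Proof.
move=> sA eA j; have := congr1 (fun M : 'cV[R]_k => M j ord0) eA; rewrite !mxE mulr1 => <-.
by apply: eq_bigr => i _; rewrite mxE mulr1 -{1}sA mxE.
Qed.

Lemma main_char n' m' (A : 'M[R]_(n' + 1)) (B : 'M[R]_(1 + m')) rhoA rhoB :
  A^T = A -> B^T = B ->
  A *m const_mx 1 = rhoA *: (const_mx 1 : 'cV_(n' + 1)) ->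
  B *m const_mx 1 = rhoB *: (const_mx 1 : 'cV_(1 + m')) ->
  exists A' : 'M[R]_n', exists B' : 'M[R]_m',
  [/\ char_poly A = char_poly A' * ('X - rhoA%:P),
      char_poly B = ('X - rhoB%:P) * char_poly B' &
      'X^((n' + 1) + (1 + m')) * char_poly (diamond A B)
      = 'X^((n' + 1) * (1 + m')) * (char_poly ((1 + m')%:R *: A') *
          (('X * ('X - ((1 + m')%:R * rhoA + (n' + 1)%:R * rhoB)%:P))
             * char_poly ((n' + 1)%:R *: B')))].
Proof.
move=> sA sB eA eB.
have [P [A' [uP eP eP3 eP4]]] := simA sA eA.
have [Q [B' [uQ eQ eQ3 eQ4]]] := simB sB eB.
exists A', B'; split.
- by rewrite (char_sim uP eP) char_block char_scalar1.
- by rewrite (char_sim uQ eQ) char_block char_scalar1.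
set n := (n' + 1)%N; set m := (1 + m')%N.
rewrite -UV_diamond sylvester (VU_K (colsum sA eA) (colsum sB eB)).
congr (_ * _).
pose K' : 'M[R]_((n' + 1) + (1 + m')) := block_mx (block_mx (m%:R *: A') 0 0 (m%:R * rhoA)%:M)
                    (col_mx 0 (row_mx (m%:R * rhoB)%:M 0))
                    (row_mx 0 (col_mx (n%:R * rhoA)%:M 0))
                    (block_mx (n%:R * rhoB)%:M 0 0 (n%:R *: B')).
have uS : block_mx P 0 0 Q \in unitmx.
  by rewrite unitmxE det_ublock unitrM -!unitmxE uP uQ.
rewrite (@char_sim _ _ _ K' _ uS); last first.
  rewrite !mulmx_block !mulmx0 !mul0mx !addr0 !add0r.
  congr block_mx.
  - by rewrite -scalemxAl eP scalemxAr scale_block_mx !scaler0 scale_scalar_mx.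
  - rewrite (const_outer _ _ rhoB) -scalemxAl -mulmxA eQ4 -eP3 -mulmxA scalemxAr.
    congr (_ *m _).
    rewrite mul_col_row !mul0mx mul1mx mulmx0 scale_block_mx !scaler0.
    by rewrite scale_scalar_mx mulrC block_mxEv row_mx0.
  - rewrite (const_outer _ _ rhoA) -scalemxAl -mulmxA eP4 -eQ3 -mulmxA scalemxAr.
    congr (_ *m _).
    rewrite mul_col_row !mul0mx mul1mx scale_block_mx !scaler0.
    by rewrite mul1mx scale_scalar_mx mulrC block_mxEh col_mx0.
  - by rewrite -scalemxAl eQ scalemxAr scale_block_mx !scaler0 scale_scalar_mx.
have E1 := @block_mxA R n' 1 (1 + m') n' 1 (1 + m') (m%:R *: A') 0 0 0
  (m%:R * rhoA)%:M (row_mx (m%:R * rhoB)%:M 0) 0 (col_mx (n%:R * rhoA)%:M 0)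
  (block_mx (n%:R * rhoB)%:M 0 0 (n%:R *: B')).
cbv zeta in E1.
rewrite -(char_cast (esym (addnA n' 1 (1 + m'))) (esym (addnA n' 1 (1 + m'))) K').
rewrite /K' -E1 row_mx0 col_mx0 char_block.
congr (_ * _).
have E2 := @block_mxA R 1 1 m' 1 1 m' (m%:R * rhoA)%:M (m%:R * rhoB)%:M 0
  (n%:R * rhoA)%:M (n%:R * rhoB)%:M 0 0 0 (n%:R *: B').
cbv zeta in E2.
rewrite E2 char_cast col_mx0 row_mx0 char_block.
congr (_ * _).
set T2 := block_mx _ _ _ _.
have eT : T2 = col_mx ((m%:R)%:M : 'M[R]_1) ((n%:R)%:M : 'M[R]_1)
               *m row_mx (rhoA%:M : 'M[R]_1) (rhoB%:M : 'M[R]_1).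
  by rewrite mul_col_row -!scalar_mxM.
have := sylvester (col_mx ((m%:R)%:M : 'M[R]_1) ((n%:R)%:M : 'M[R]_1))
                  (row_mx (rhoA%:M : 'M[R]_1) (rhoB%:M : 'M[R]_1)).
rewrite -eT mul_row_col -!scalar_mxM -raddfD char_scalar1 => H.
apply: (@mulfI _ ('X : {poly R})); first by rewrite polyX_eq0.
rewrite -[X in X * char_poly _]expr1 H mulrA -expr2.
by rewrite [rhoA * _]mulrC [rhoB * _]mulrC.
Qed.

Lemma Nc_char_scale (P : pred R) k (c : R) (M : 'M[R]_k) : 0 < c ->
  (forall x, P (c * x) = P x) -> Nc P (char_poly (c *: M)) = Nc P (char_poly M).
Proof.
move=> c0 HP; rewrite -(Nc_comp _ c0 HP) char_scale Nc_scale //.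
by rewrite expf_neq0 // gt_eqF.
Qed.

Lemma count_eq (P : pred R) a b (pAB pA pB : {poly R}) c :
  pAB \is monic -> pA \is monic -> pB \is monic ->
  'X^a * pAB = 'X^b * (pA * ('X * ('X - c%:P) * pB)) ->
  (P 0%R * a + Nc P pAB = P 0%R * b + Nc P pA + (P 0%R * 1 + P c) + Nc P pB)%N.
Proof.
move=> mAB mA mB E.
have X0 : forall k, ('X^k : {poly R}) != 0 by move=> k; rewrite expf_neq0 // polyX_eq0.
have mn : forall p : {poly R}, p \is monic -> p != 0 by move=> p /monic_neq0.
have := congr1 (Nc P) E.
rewrite Nc_mul ?mulf_neq0 ?X0 ?mn // Nc_Xn => ->.
rewrite Nc_mul ?mulf_neq0 ?X0 ?mn ?polyX_eq0 ?polyXsubC_eq0 ?monicX ?monicXsubC // Nc_Xn.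
rewrite Nc_mul ?mulf_neq0 ?X0 ?mn ?polyX_eq0 ?polyXsubC_eq0 ?monicX ?monicXsubC //.
rewrite Nc_mul ?mulf_neq0 ?X0 ?mn ?polyX_eq0 ?polyXsubC_eq0 ?monicX ?monicXsubC //.
rewrite Nc_mul ?mulf_neq0 ?X0 ?mn ?polyX_eq0 ?polyXsubC_eq0 ?monicX ?monicXsubC //.
by rewrite -['X]expr1 Nc_Xn Nc_XsubC !addnA.
Qed.


Lemma key (P : pred R) n' m' (A : 'M[R]_(n' + 1)) (B : 'M[R]_(1 + m')) rhoA rhoB :
  (forall c x, 0 < c -> P (c * x) = P x) ->
  A^T = A -> B^T = B ->
  A *m const_mx 1 = rhoA *: (const_mx 1 : 'cV_(n' + 1)) ->
  B *m const_mx 1 = rhoB *: (const_mx 1 : 'cV_(1 + m')) ->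
  (P 0%R * ((n' + 1) + (1 + m')) + Nc P (char_poly (diamond A B)) + P rhoA + P rhoB
   = P 0%R * ((n' + 1) * (1 + m')) + Nc P (char_poly A) + Nc P (char_poly B) + P 0%R * 1
     + P ((1 + m')%:R * rhoA + (n' + 1)%:R * rhoB)%R)%N.
Proof.
move=> HP sA sB eA eB.
have [A' [B' [cA cB E]]] := main_char sA sB eA eB.
have := count_eq P (char_poly_monic _) (char_poly_monic _) (char_poly_monic _) E.
rewrite (@Nc_char_scale P _ _ A') ?ltr0n ?addn1 ?add1n //; last by move=> x; rewrite HP // ltr0n ?addn1 ?add1n.
rewrite (@Nc_char_scale P _ _ B') ?ltr0n ?addn1 ?add1n //; last by move=> x; rewrite HP // ltr0n ?addn1 ?add1n.
move=> ->; rewrite cA cB.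
have mn : forall p : {poly R}, p \is monic -> p != 0 by move=> p /monic_neq0.
rewrite (@Nc_mul R P (char_poly A')) ?mulf_neq0 ?mn ?char_poly_monic ?monicXsubC //.
rewrite (@Nc_mul R P ('X - rhoB%:P)) ?mulf_neq0 ?mn ?char_poly_monic ?monicXsubC //.
rewrite !Nc_XsubC.
lia.
Qed.

Lemma key2 (P : pred R) n' m' (A : 'M[R]_(n' + 1)) (B : 'M[R]_(1 + m')) rhoA rhoB
   (b0 bA bB bc : bool) :
  (forall c x, 0 < c -> P (c * x) = P x) ->
  P 0 = b0 -> P rhoA = bA -> P rhoB = bB ->
  P ((1 + m')%:R * rhoA + (n' + 1)%:R * rhoB) = bc ->
  A^T = A -> B^T = B ->
  A *m const_mx 1 = rhoA *: (const_mx 1 : 'cV_(n' + 1)) ->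
  B *m const_mx 1 = rhoB *: (const_mx 1 : 'cV_(1 + m')) ->
  (b0 * ((n' + 1) + (1 + m')) + Nc P (char_poly (diamond A B)) + bA + bB
   = b0 * ((n' + 1) * (1 + m')) + Nc P (char_poly A) + Nc P (char_poly B) + b0 * 1
     + bc)%N.
Proof. by move=> HP <- <- <- <-; apply: key. Qed.

End Main.


Unset Implicit Arguments.
Theorem theorem6 (R : realType) (n m : nat) (A : 'M[R]_n) (B : 'M[R]_m)
    (rhoA rhoB : R) :
  (0 < n)%N -> (0 < m)%N ->
  A^T = A -> B^T = B ->
  0 < rhoA -> A *m ones R n = rhoA *: ones R n ->
  0 < rhoB -> B *m ones R m = rhoB *: ones R m ->
  [/\ n_neg (diamond A B) = (n_neg A + n_neg B)%N,
      (n_pos (diamond A B) : int) = (n_pos A + n_pos B)%:Z - 1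
    & (n_zero (diamond A B) : int)
        = (n * m)%:Z - n%:Z - m%:Z + 1 + (n_zero A)%:Z + (n_zero B)%:Z].
Proof.
case: n A => [|n'] A; first by [].
move: A; rewrite -(addn1 n') => A.
case: m B => [|m'] B; first by move=> _ h; rewrite ltnn in h.
move: B; rewrite -(add1n m') => B.
move=> _ _ sA sB rA eA rB eB.
have hc : 0 < ((1 + m')%:R * rhoA + (n' + 1)%:R * rhoB) :> R.
  by rewrite addr_gt0 // mulr_gt0 // ltr0n ?addn1 ?add1n.
have HN := @key2 R (fun x => x < 0) n' m' A B rhoA rhoB false false false false
  (fun c x c0 => pmulr_rlt0 x c0) (ltxx 0) (lt_gtF rA) (lt_gtF rB) (lt_gtF hc)
  sA sB eA eB.
have HP := @key2 R (fun x => 0 < x) n' m' A B rhoA rhoB false true true true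
  (fun c x c0 => pmulr_rgt0 x c0) (ltxx 0) rA rB hc sA sB eA eB.
have hz : forall c x : R, 0 < c -> (c * x == 0) = (x == 0).
  by move=> c x c0; rewrite mulf_eq0 (gt_eqF c0).
have HZ := @key2 R (fun x => x == 0) n' m' A B rhoA rhoB true false false false
  hz (eqxx 0) (gt_eqF rA) (gt_eqF rB) (gt_eqF hc) sA sB eA eB.
have -> : n_neg (diamond A B) = Nc (fun x => x < 0) (char_poly (diamond A B)) by [].
have -> : n_neg A = Nc (fun x => x < 0) (char_poly A) by [].
have -> : n_neg B = Nc (fun x => x < 0) (char_poly B) by [].
have -> : n_pos (diamond A B) = Nc (fun x => 0 < x) (char_poly (diamond A B)) by [].
have -> : n_pos A = Nc (fun x => 0 < x) (char_poly A) by [].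
have -> : n_pos B = Nc (fun x => 0 < x) (char_poly B) by [].
have -> : n_zero (diamond A B) = Nc (fun x => x == 0) (char_poly (diamond A B)) by [].
have -> : n_zero A = Nc (fun x => x == 0) (char_poly A) by [].
have -> : n_zero B = Nc (fun x => x == 0) (char_poly B) by [].
split; lia.
Qed.
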